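(* Let $M$ be a $\lambda$-term and $\vec x$ a list of $n$ distinct variables with $FV(M)\subseteq\vec x$. If $M$ is head-normalizable, then $\llbracket M\rrbracket_{\vec x}$ is not the zero distributor, i.e. $\llbracket M\rrbracket_{\vec x}(\Delta,a)\neq\emptyset$ for some $\Delta\in(SD)^n$, $a\in D$.
   Context: A $\lambda$-term is in head-normal form if it has the shape $\lambda y_1\dots\lambda y_m.\,y\,Q_1\cdots Q_p$; it is head-normalizable if it $\beta$-reduces to a head-normal form. $[n]=\{1,\dots,n\}$. Fix a class $\mathcal C$ of functions between finite ordinals equal to one of: all bijections, all injections, all surjections, all functions. For a small category $X$, $SX$ has finite lists of objects of $X$ as objects and morphisms $\langle x_1,\dots,x_n\rangle\to\langle y_1,\dots,y_m\rangle$ the tuples $\langle\alpha,f_1,\dots,f_m\rangle$ with $\alpha:[m]\to[n]$ in $\mathcal C$, $f_i:x_{\alpha(i)}\to y_i$; composite of $\langle\alpha,\vec f\rangle$ then $\langle\beta,\vec g\rangle$ is $\langle\alpha\circ\beta,(g_i\circ f_{\beta(i)})_i\rangle$; tensor $\oplus$ = concatenation, unit $\langle\rangle$. Fix a small category $A$. $D=D_A$ is the colimit of $D_0=A$, $D_{k+1}=(SD_k)^{o}\times D_k\sqcup A$ along canonical inclusions: objects $a::=o\mid\vec a\Rightarrow a$ ($o\in\mathrm{Ob}(A)$); morphisms are those of $A$ and $\langle\alpha,\vec f\rangle\Rightarrow f:(\vec a\Rightarrow a)\to(\vec a'\Rightarrow a')$ for $\langle\alpha,\vec f\rangle:\vec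 a'\to\vec a$ in $SD$, $f:a\to a'$. $SD=S(D_A)$. Contexts are objects of $(SD)^n$; $\otimes$ is componentwise concatenation; $\Delta\oplus\langle\vec a\rangle$ appends a component. Denotation $\llbracket M\rrbracket_{\vec x}:((SD)^n)^{o}\times D\to\mathrm{Set}$ for $\vec x=\langle x_1..x_n\rangle\supseteq FV(M)$ (functorial action from hom-functors and coends): $\llbracket x_i\rrbracket_{\vec x}(\Delta,a)=(SD)^n(\Delta,\langle\langle\rangle,\dots,\langle a\rangle,\dots,\langle\rangle\rangle)$ ($\langle a\rangle$ at position $i$); $\llbracket\lambda y.P\rrbracket_{\vec x}(\Delta,a)=\llbracket P\rrbracket_{\vec x\oplus\langle y\rangle}(\Delta\oplus\langle\vec a'\rangle,a')$ if $a=\vec a'\Rightarrow a'$, $\emptyset$ if $a$ atomic; $\llbracket PQ\rrbracket_{\vec x}(\Delta,a)=\int^{\vec a=\langle a_1..a_k\rangle\in SD}\int^{\Gamma_0..\Gamma_k\in(SD)^n}\llbracket P\rrbracket_{\vec x}(\Gamma_0,\vec a\Rightarrow a)\times\prod_{i=1}^k\llbracket Q\rrbracket_{\vec x}(\Gamma_i,a_i)\times(SD)^n(\Delta,\bigotimes_{i=0}^k\Gamma_i)$. *)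

(* Defs.v *)
From Stdlib Require Import Relations ClassicalEpsilon.
From HB Require Import structures.
From mathcomp Require Import all_boot all_order.

Set Implicit Arguments.
Unset Strict Implicit.
Unset Printing Implicit Defensive.

Inductive term : Type :=
| Var (v : nat)
| Lam (M : term)
| App (M N : term).

(* FV(M) is contained in a list of n variables *)
Fixpoint scoped (n : nat) (M : term) : bool :=
  match M with
  | Var v => v < n
  | Lam P => scoped n.+1 P
  | App P Q => scoped n P && scoped n Q
  end.

Fixpoint lift (d c : nat) (M : term) : term :=
  match M with
  | Var v => if v < c then Var v else Var (v + d)
  | Lam P => Lam (lift d c.+1 P)
  | App P Q => App (lift d c P) (lift d c Q)
  end.

(* subst N j M : substitute N for index j in M (N lives outside the j binders) *)
Fixpoint subst (N : term) (j : nat) (M : term) : term :=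
  match M with
  | Var v => if v == j then lift j 0 N else if j < v then Var v.-1 else Var v
  | Lam P => Lam (subst N j.+1 P)
  | App P Q => App (subst N j P) (subst N j Q)
  end.

Inductive beta : term -> term -> Prop :=
| beta_redex M N : beta (App (Lam M) N) (subst N 0 M)
| beta_appL M M' N : beta M M' -> beta (App M N) (App M' N)
| beta_appR M N N' : beta N N' -> beta (App M N) (App M N')
| beta_lam M M' : beta M M' -> beta (Lam M) (Lam M').

Definition beta_star : term -> term -> Prop := clos_refl_trans term beta.

Inductive head_var_app : term -> Prop :=
| hva_var v : head_var_app (Var v)
| hva_app M N : head_var_app M -> head_var_app (App M N).

Inductive hnf : term -> Prop :=
| hnf_head M : head_var_app M -> hnf M
| hnf_lam M : hnf M -> hnf (Lam M).

Definition head_normalizable (M : term) : Prop :=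
  exists N, beta_star M N /\ hnf N.

Record Cat : Type := {
  Ob : Type;
  Hom : Ob -> Ob -> Type;
  idm : forall x, Hom x x;
  cmp : forall x y z, Hom x y -> Hom y z -> Hom x z;  (* diagrammatic order *)
  cmp_id_l : forall x y (f : Hom x y), cmp (idm x) f = f;
  cmp_id_r : forall x y (f : Hom x y), cmp f (idm y) = f;
  cmp_assoc : forall x y z w (f : Hom x y) (g : Hom y z) (h : Hom z w),
      cmp (cmp f g) h = cmp f (cmp g h)
}.
Arguments idm {c} x.
Arguments cmp {c x y z} _ _.

Inductive Cls : Type := Cbij | Cinj | Csurj | Call.

Definition surj {m n} (f : 'I_m -> 'I_n) : Prop := forall y, exists x, f x = y.

Definition inC (c : Cls) {m n} (f : 'I_m -> 'I_n) : Prop :=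
  match c with
  | Cbij => injective f /\ surj f
  | Cinj => injective f
  | Csurj => surj f
  | Call => True
  end.

Lemma inC_id c m : inC c (fun i : 'I_m => i).
Proof.
have Hs : surj (fun i : 'I_m => i) by move=> y; exists y.
by case: c => //=; split.
Qed.

Lemma inC_comp c m1 m2 m3 (f : 'I_m1 -> 'I_m2) (g : 'I_m2 -> 'I_m3) :
  inC c f -> inC c g -> inC c (fun i => g (f i)).
Proof.
have Hs : surj f -> surj g -> surj (fun i => g (f i)).
  by move=> sf sg y; case: (sg y) => x <-; case: (sf x) => z <-; exists z.
case: c => /=.
- by case=> If Sf [Ig Sg]; split; [move=> x y /Ig /If|exact: Hs].
- by move=> If Ig x y /Ig /If.
- exact: Hs.
- by [].
Qed.

Lemma ord0_absurd (i : 'I_0) : False. Proof. by case: i. Qed.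

Section Model.
Variable A : Cat.
Variable cls : Cls.

(* objects  a ::= o | <a_1..a_k> => a   (a list is a function 'I_k -> ty) *)

Inductive ty : Type :=
| tyA (o : Ob A)
| tyArr (k : nat) (x : 'I_k -> ty) (a : ty).

(* <alpha, f> => g : (x => a) -> (x' => a')  for <alpha,f> : x' -> x in SD *)
Inductive Dhom : ty -> ty -> Type :=
| homA (o o' : Ob A) : @Hom A o o' -> Dhom (tyA o) (tyA o')
| homArr (k : nat) (x : 'I_k -> ty) (a : ty) (k' : nat) (x' : 'I_k' -> ty) (a' : ty)
    (al : 'I_k -> 'I_k') (Hal : inC cls al)
    (fs : forall i, Dhom (x' (al i)) (x i)) (g : Dhom a a') :
    Dhom (tyArr x a) (tyArr x' a').

Fixpoint Did (a : ty) : Dhom a a :=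
  match a with
  | tyA o => homA (idm o)
  | tyArr k x a' => @homArr k x a' k x a' (fun i => i) (inC_id cls k)
                      (fun i => Did (x i)) (Did a')
  end.

Definition DcompA (o' : Ob A) (a c : ty) (f : Dhom a (tyA o')) (g : Dhom (tyA o') c)
  : Dhom a c :=
  match f in Dhom a0 b0
    return (match b0 with
            | tyA o1 => Dhom b0 c -> Dhom a0 c
            | _ => unit end) with
  | homA o o1 h => fun g =>
      match g in Dhom b1 c1
        return (match b1 with
                | tyA o2 => @Hom A o o2 -> Dhom (tyA o) c1
                | _ => unit end) with
      | homA o2 o3 h' => fun h => homA (cmp h h')
      | homArr _ _ _ _ _ _ _ _ _ _ => tt
      end h
  | homArr _ _ _ _ _ _ _ _ _ _ => tt
  end g.

Definition DcompArr (k' : nat) (x' : 'I_k' -> ty) (a' : ty)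
  (recx : forall i a c, Dhom a (x' i) -> Dhom (x' i) c -> Dhom a c)
  (reca : forall a c, Dhom a a' -> Dhom a' c -> Dhom a c)
  (a c : ty) (f : Dhom a (tyArr x' a')) (g : Dhom (tyArr x' a') c) : Dhom a c :=
  match f in Dhom a0 b0
    return (match b0 with
            | tyArr k0 x0 a0' =>
                (forall i a c, Dhom a (x0 i) -> Dhom (x0 i) c -> Dhom a c) ->
                (forall a c, Dhom a a0' -> Dhom a0' c -> Dhom a c) ->
                Dhom b0 c -> Dhom a0 c
            | _ => unit end) with
  | homA _ _ _ => tt
  | homArr k x a1 k0 x0 a0' al Hal fs g0 => fun recx reca g =>
      match g in Dhom b1 c1
        return (match b1 with
                | tyArr k1 x1 a1' =>
                    forall al : 'I_k -> 'I_k1, inC cls al ->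
                    (forall i, Dhom (x1 (al i)) (x i)) -> Dhom a1 a1' ->
                    (forall i a c, Dhom a (x1 i) -> Dhom (x1 i) c -> Dhom a c) ->
                    (forall a c, Dhom a a1' -> Dhom a1' c -> Dhom a c) ->
                    Dhom (tyArr x a1) c1
                | _ => unit end) with
      | homA _ _ _ => tt
      | homArr k1 x1 a1' k2 x2 a2 be Hbe hs g1 => fun al Hal fs g0 recx reca =>
          @homArr k x a1 k2 x2 a2 (fun i => be (al i)) (inC_comp Hal Hbe)
            (fun i => recx (al i) _ _ (hs (al i)) (fs i)) (reca _ _ g0 g1)
      end al Hal fs g0 recx reca
  end recx reca g.

Fixpoint Dcomp (b : ty) {struct b} : forall a c, Dhom a b -> Dhom b c -> Dhom a c :=
  match b as b0 return forall a c, Dhom a b0 -> Dhom b0 c -> Dhom a c with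
  | tyA o' => fun a c f g => DcompA f g
  | tyArr k' x' a' => fun a c f g =>
      DcompArr (fun i => @Dcomp (x' i)) (@Dcomp a') f g
  end.
Arguments Dcomp {b a c} _ _.

(* SD = S(D_A): finite lists of objects of D                            *)

Record SOb : Type := mkSOb { slen : nat; sel : 'I_slen -> ty }.
Arguments sel : clear implicits.

(* raw morphism <alpha, f_1..f_m> : xs -> ys (no class condition) *)
Record RSHom (xs ys : SOb) : Type := mkRSHom {
  ridx : 'I_(slen ys) -> 'I_(slen xs);
  rcmp : forall i, Dhom (sel xs (ridx i)) (sel ys i) }.

Definition SHom (xs ys : SOb) : Type := { h : RSHom xs ys | inC cls (ridx h) }.

Definition RScomp xs ys zs (h : RSHom xs ys) (g : RSHom ys zs) : RSHom xs zs :=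
  @mkRSHom xs zs (fun i => ridx h (ridx g i))
    (fun i => Dcomp (rcmp h (ridx g i)) (rcmp g i)).

Definition Scomp xs ys zs (h : SHom xs ys) (g : SHom ys zs) : SHom xs zs :=
  exist _ (RScomp (proj1_sig h) (proj1_sig g))
    (inC_comp (proj2_sig g) (proj2_sig h)).

Definition RSid (xs : SOb) : RSHom xs xs :=
  @mkRSHom xs xs (fun i => i) (fun i => Did (sel xs i)).

Definition Sid (xs : SOb) : SHom xs xs := exist _ (RSid xs) (inC_id cls _).

Definition Sempty : SOb := mkSOb (fun i : 'I_0 => False_rect ty (ord0_absurd i)).
Definition Ssing (a : ty) : SOb := mkSOb (fun _ : 'I_1 => a).

Definition Ssing_hom (a a' : ty) (f : Dhom a a') : SHom (Ssing a) (Ssing a') :=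
  exist _ (@mkRSHom (Ssing a) (Ssing a') (fun i => i) (fun _ => f)) (inC_id cls _).

Definition Scat (s t : SOb) : SOb :=
  @mkSOb (slen s + slen t)
    (fun p => match split p with inl i => sel s i | inr j => sel t j end).

Lemma Scat_l (s t : SOb) (i : 'I_(slen s)) :
  sel (Scat s t) (lshift (slen t) i) = sel s i.
Proof. by rewrite /Scat /= (unsplitK (inl i)). Qed.

Lemma Scat_r (s t : SOb) (j : 'I_(slen t)) :
  sel (Scat s t) (rshift (slen s) j) = sel t j.
Proof. by rewrite /Scat /= (unsplitK (inr j)). Qed.

Definition castL (a a' b : ty) (e : a = a') (f : Dhom a b) : Dhom a' b :=
  eq_rect a (fun z => Dhom z b) f a' e.

Definition RScat (s t s' t' : SOb) (u : RSHom s s') (v : RSHom t t') :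
  RSHom (Scat s t) (Scat s' t') :=
  @mkRSHom (Scat s t) (Scat s' t')
    (fun p => match split p with
              | inl i => lshift (slen t) (ridx u i)
              | inr j => rshift (slen s) (ridx v j) end)
    (fun p =>
       match split p as sp
         return Dhom (sel (Scat s t) (match sp with
                                      | inl i => lshift (slen t) (ridx u i)
                                      | inr j => rshift (slen s) (ridx v j) end))
                     (match sp with inl i => sel s' i | inr j => sel t' j end) with
       | inl i => castL (esym (Scat_l t (ridx u i))) (rcmp u i)
       | inr j => castL (esym (Scat_r s (ridx v j))) (rcmp v j)
       end).

Definition Sbig (m : nat) (F : 'I_m -> SOb) : SOb :=
  @mkSOb (\sum_(i < m) slen (F i))
    (fun p => let s := @tagnat.sig m (fun i => slen (F i)) p in
              sel (F (tag s)) (tagged s)).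

Lemma Sbig_Rank m (F : 'I_m -> SOb) i (t : 'I_(slen (F i))) :
  sel (Sbig F) (@tagnat.Rank m (fun i => slen (F i)) i t) = sel (F i) t.
Proof. by rewrite /Sbig /= /tagnat.Rank tagnat.rankK. Qed.

Definition RSbig m (F G : 'I_m -> SOb) (u : forall i, RSHom (F i) (G i)) :
  RSHom (Sbig F) (Sbig G) :=
  @mkRSHom (Sbig F) (Sbig G)
    (fun p => let s := @tagnat.sig m (fun i => slen (G i)) p in
              @tagnat.Rank m (fun i => slen (F i)) (tag s) (ridx (u (tag s)) (tagged s)))
    (fun p => let s := @tagnat.sig m (fun i => slen (G i)) p in
              castL (esym (@Sbig_Rank m F (tag s) (ridx (u (tag s)) (tagged s))))
                    (rcmp (u (tag s)) (tagged s))).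

Definition RSreindex m m' (F : 'I_m -> SOb) (al : 'I_m' -> 'I_m) :
  RSHom (Sbig F) (Sbig (fun j => F (al j))) :=
  @mkRSHom (Sbig F) (Sbig (fun j => F (al j)))
    (fun p => let s := @tagnat.sig m' (fun j => slen (F (al j))) p in
              @tagnat.Rank m (fun i => slen (F i)) (al (tag s)) (tagged s))
    (fun p => let s := @tagnat.sig m' (fun j => slen (F (al j))) p in
              castL (esym (@Sbig_Rank m F (al (tag s)) (tagged s))) (Did _)).

Section Contexts.
Variable n : nat.

Definition ctx : Type := 'I_n -> SOb.
Definition CtxHom (D G : ctx) : Type := forall j, SHom (D j) (G j).
Definition RCtxHom (D G : ctx) : Type := forall j, RSHom (D j) (G j).
Definition raw (D G : ctx) (d : CtxHom D G) : RCtxHom D G := fun j => proj1_sig (d j).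

Definition Ccomp (D G H : ctx) (d : CtxHom D G) (e : CtxHom G H) : CtxHom D H :=
  fun j => Scomp (d j) (e j).
Definition RCcomp (D G H : ctx) (d : RCtxHom D G) (e : RCtxHom G H) : RCtxHom D H :=
  fun j => RScomp (d j) (e j).
Definition Cid (D : ctx) : CtxHom D D := fun j => Sid (D j).

Definition Ccat (D G : ctx) : ctx := fun j => Scat (D j) (G j).
Definition Cbig (m : nat) (Gs : 'I_m -> ctx) : ctx := fun j => Sbig (fun i => Gs i j).

Definition Cunit (p : nat) (a : ty) : ctx :=
  fun j => if nat_of_ord j == p then Ssing a else Sempty.

Definition Cunit_hom (p : nat) (a a' : ty) (f : Dhom a a') :
  CtxHom (Cunit p a) (Cunit p a') :=
  fun j => match nat_of_ord j == p as b
             return SHom (if b then Ssing a else Sempty) (if b then Ssing a' else Sempty) with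
           | true => Ssing_hom f
           | false => Sid Sempty
           end.
End Contexts.

Definition Cext n (D : ctx n) (s : SOb) : ctx n.+1 :=
  fun j => match unlift ord_max j with Some j' => D j' | None => s end.

Definition Cext_hom n (D D' : ctx n) (s s' : SOb) (d : CtxHom D D') (u : SHom s s') :
  CtxHom (Cext D s) (Cext D' s') :=
  fun j => match unlift ord_max j as o
             return SHom (match o with Some j' => D j' | None => s end)
                         (match o with Some j' => D' j' | None => s' end) with
           | Some j' => d j'
           | None => u
           end.

(* Distributors ((SD)^n)^op x D -> Set, given by object and morphism parts *)

Record Dist (n : nat) : Type := {
  dob : ctx n -> ty -> Type;
  dact : forall (D D' : ctx n) (a a' : ty),
      CtxHom D D' -> Dhom a a' -> dob D' a -> dob D a' }.
Arguments dob {n} d _ _.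
Arguments dact {n} d {D D' a a'} _ _ _.

Definition quot (X : Type) (R : X -> X -> Prop) : Type :=
  { P : X -> Prop | exists x, P = clos_refl_sym_trans X R x }.

Definition qclass (X : Type) (R : X -> X -> Prop) (x : X) : quot R :=
  exist _ (clos_refl_sym_trans X R x) (ex_intro _ x erefl).

Definition qrep (X : Type) (R : X -> X -> Prop) (c : quot R) : X :=
  proj1_sig (constructive_indefinite_description _ (proj2_sig c)).

Definition dist_var (n v : nat) : Dist n.
refine {| dob := fun D a => if v < n then CtxHom D (@Cunit n (n - v.+1) a) else Empty_set;
          dact := fun D D' a a' d f =>
            match v < n as b return
              (if b then CtxHom D' (@Cunit n (n - v.+1) a) else Empty_set) ->
              (if b then CtxHom D (@Cunit n (n - v.+1) a') else Empty_set) with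
            | true => fun h => Ccomp d (Ccomp h (@Cunit_hom n (n - v.+1) a a' f))
            | false => fun e => e
            end |}.
Defined.

Definition lam_ob n (P : Dist n.+1) (D : ctx n) (a : ty) : Type :=
  match a with
  | tyA _ => Empty_set
  | tyArr k x a' => dob P (Cext D (mkSOb x)) a'
  end.

Definition dist_lam n (P : Dist n.+1) : Dist n.
refine {| dob := lam_ob P;
          dact := fun D D' a1 a2 d f =>
            match f in Dhom b1 b2 return lam_ob P D' b1 -> lam_ob P D b2 with
            | homA _ _ _ => fun e => match e with end
            | homArr k x a1' k' x' a2' al Hal fs g => fun p =>
                dact P (Cext_hom d (exist _ (@mkRSHom (mkSOb x') (mkSOb x) al fs) Hal)) g p
            end |}.
Defined.

Section App.
Variable n : nat.
Variables P Q : Dist n.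

(* a representative of an element of
   \int^{a_vec} \int^{Gamma_0..Gamma_k}
     P(Gamma_0, a_vec => a) x prod_i Q(Gamma_i, a_i) x (SD)^n(Delta, Gamma_0 ⊗ ... ⊗ Gamma_k) *)
Record AppRep (D : ctx n) (a : ty) : Type := mkRep {
  ar_k : nat;
  ar_x : 'I_ar_k -> ty;
  ar_G0 : ctx n;
  ar_G : 'I_ar_k -> ctx n;
  ar_p : dob P ar_G0 (tyArr ar_x a);
  ar_q : forall i, dob Q (ar_G i) (ar_x i);
  ar_d : CtxHom D (Ccat ar_G0 (Cbig ar_G)) }.
Arguments ar_x {D a} _ _.
Arguments ar_G {D a} _ _.
Arguments ar_q {D a} _ _.

Definition arrHom k k' (x : 'I_k -> ty) (x' : 'I_k' -> ty) (a a' : ty)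
  (u : SHom (mkSOb x) (mkSOb x')) (f : Dhom a a') : Dhom (tyArr x' a) (tyArr x a') :=
  @homArr k' x' a k x a' (ridx (proj1_sig u)) (proj2_sig u) (rcmp (proj1_sig u)) f.

(* dinaturality in Gamma_0, ..., Gamma_k *)
Definition gen_ctx (D : ctx n) (a : ty) (r1 r2 : AppRep D a) : Prop :=
  exists k (x : 'I_k -> ty) (G0 G0' : ctx n) (G G' : 'I_k -> ctx n)
         (g0 : CtxHom G0 G0') (g : forall i, CtxHom (G i) (G' i))
         (p : dob P G0' (tyArr x a)) (q : forall i, dob Q (G' i) (x i))
         (d : CtxHom D (Ccat G0 (Cbig G))) (d' : CtxHom D (Ccat G0' (Cbig G'))),
    r1 = @mkRep D a k x G0 G (dact P g0 (Did _) p) (fun i => dact Q (g i) (Did _) (q i)) d /\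
    r2 = @mkRep D a k x G0' G' p q d' /\
    raw d' = RCcomp (raw d)
               (fun j => RScat (proj1_sig (g0 j))
                               (RSbig (fun i => proj1_sig (g i j)))).

(* dinaturality in a_vec *)
Definition gen_vec (D : ctx n) (a : ty) (r1 r2 : AppRep D a) : Prop :=
  exists k k' (x : 'I_k -> ty) (x' : 'I_k' -> ty) (u : SHom (mkSOb x) (mkSOb x'))
         (G0 : ctx n) (G : 'I_k -> ctx n)
         (p : dob P G0 (tyArr x' a)) (q : forall i, dob Q (G i) (x i))
         (d : CtxHom D (Ccat G0 (Cbig G)))
         (d' : CtxHom D (Ccat G0 (Cbig (fun j => G (ridx (proj1_sig u) j))))),
    r1 = @mkRep D a k x G0 G (dact P (Cid G0) (arrHom u (Did a)) p) q d /\
    r2 = @mkRep D a k' x' G0 (fun j => G (ridx (proj1_sig u) j)) p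
           (fun j => dact Q (Cid _) (rcmp (proj1_sig u) j) (q (ridx (proj1_sig u) j))) d' /\
    raw d' = RCcomp (raw d)
               (fun j => RScat (RSid (G0 j))
                               (RSreindex (fun i => G i j) (ridx (proj1_sig u)))).

Definition app_rel (D : ctx n) (a : ty) (r1 r2 : AppRep D a) : Prop :=
  gen_ctx r1 r2 \/ gen_vec r1 r2.

Definition app_ob (D : ctx n) (a : ty) : Type := quot (@app_rel D a).

Definition app_act_rep (D D' : ctx n) (a a' : ty) (d : CtxHom D D') (f : Dhom a a')
  (r : AppRep D' a) : AppRep D a' :=
  @mkRep D a' (ar_k r) (ar_x r) (ar_G0 r) (ar_G r)
    (dact P (Cid _) (arrHom (Sid (mkSOb (ar_x r))) f) (ar_p r))
    (ar_q r) (Ccomp d (ar_d r)).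

Definition dist_app : Dist n :=
  {| dob := app_ob;
     dact := fun D D' a a' d f c => qclass (@app_rel D a') (app_act_rep d f (qrep c)) |}.
End App.

(* The denotation [[M]]_{x_1..x_n}; de Bruijn index v is the variable    *)
(* at position n - v (1-based), i.e. lambda appends at the end.         *)

Fixpoint sem (M : term) (n : nat) {struct M} : Dist n :=
  match M with
  | Var v => dist_var n v
  | Lam P => dist_lam (sem P n.+1)
  | App P Q => dist_app (sem P n) (sem Q n)
  end.

End Model.

(* Main.v *)
From Stdlib Require Import List Permutation ClassicalEpsilon.
Require Import Defs.
From Stdlib Require Import Relations.
From HB Require Import structures.
From mathcomp Require Import all_boot all_order.
From mathcomp Require Import zify.
Set Implicit Arguments.
Unset Strict Implicit.
Unset Printing Implicit Defensive.

Section Work.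
Variable A : Cat.
Variable cls : Cls.
Variable o0 : Ob A.
Local Notation ty := (ty A).
Local Notation SOb := (SOb A).
Definition dty : ty := tyA o0.

Definition toList (s : SOb) : seq ty := map (@sel A s) (enum 'I_(slen s)).

Lemma size_toList s : size (toList s) = slen s.
Proof. by rewrite /toList size_map size_enum_ord. Qed.

Lemma nth_toList s (i : 'I_(slen s)) d : nth d (toList s) i = sel i.
Proof.
rewrite /toList (nth_map i); last by rewrite size_enum_ord.
by congr sel; apply: val_inj; rewrite /= nth_enum_ord.
Qed.

Lemma nth_error_toList s (i : 'I_(slen s)) : List.nth_error (toList s) i = Some (sel i).
Proof.
have H : (i < size (toList s))%N by rewrite size_toList.
rewrite (List.nth_error_nth' _ dty); last by apply/ltP.
rewrite -(nth_toList i dty); congr Some; elim: (toList s) (nat_of_ord i) => [|x l IH] [|n] //=.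
Qed.

Lemma nth_error_toList_lt s n x : List.nth_error (toList s) n = Some x -> (n < slen s)%N.
Proof.
move=> H; rewrite -size_toList; apply/ltP.
by apply List.nth_error_Some; rewrite H.
Qed.

Lemma perm_shom s t : Permutation (toList s) (toList t) -> inhabited (SHom cls s t).
Proof.
move=> /Permutation_nth_error [Hlen [f [Hinj Hf]]].
have Hlt : forall i : 'I_(slen t), (f i < slen s)%N.
  move=> i; have := Hf i; rewrite nth_error_toList => /esym.
  exact: nth_error_toList_lt.
pose r (i : 'I_(slen t)) : 'I_(slen s) := Ordinal (Hlt i).
have E : forall i, sel (r i) = sel i.
  move=> i; have := Hf i; rewrite nth_error_toList.
  by rewrite (_ : f i = nat_of_ord (r i)) // nth_error_toList => -[->].
have rinj : injective r.
  by move=> x y /(congr1 val) /= /Hinj /val_inj.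
have Hsz : slen s = slen t.
  have sz : forall l : seq ty, List.length l = size l by elim => //= x l ->.
  by rewrite -(size_toList s) -(size_toList t) -!sz.
have rsurj : surj r.
  move=> y; have := inj_card_onto rinj _ y.
  rewrite !card_ord => /(_ _) H.
  have /codomP [x ->] := H (eq_leq Hsz); by exists x.
have HC : inC cls r by case: cls => //=; split.
constructor; exists (@mkRSHom A cls s t r (fun i => castL (esym (E i)) (Did cls (sel i)))).
exact: HC.
Qed.

Lemma toList_eq s l : slen s = size l -> (forall i : 'I_(slen s), sel i = nth dty l i) -> toList s = l.
Proof.
move=> Hs Hn; apply: (@eq_from_nth _ dty); first by rewrite size_toList.
move=> i; rewrite size_toList => Hi.
by rewrite -[i]/(nat_of_ord (Ordinal Hi)) nth_toList Hn.
Qed.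

Lemma toList_Scat s t : toList (Scat s t) = toList s ++ toList t.
Proof.
apply: toList_eq; first by rewrite size_cat !size_toList.
move=> p; rewrite nth_cat size_toList /Scat /=.
case: splitP => [i Ei|k Ek].
  by rewrite Ei nth_toList.
by rewrite Ek addKn nth_toList.
Qed.

Lemma toList_Sempty : toList (Sempty A) = [::].
Proof. by apply: toList_eq => // -[]. Qed.

Lemma toList_Ssing a : toList (Ssing a) = [:: a].
Proof. by apply: toList_eq => // -[[|]]. Qed.

Lemma nth_flatten_big m (F : 'I_m -> seq ty) (i : 'I_m) j :
  (j < size (F i))%N ->
  nth dty (flatten [seq F k | k <- enum 'I_m]) (\sum_(k < m | (k < i)%N) size (F k) + j) = nth dty (F i) j.
Proof.
elim: m F i j => [|m IH] F i j; first by case: i.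
rewrite enum_ordSl /= big_mkcond big_ord_recl /= -map_comp.
case: (unliftP ord0 i) => [i' ->|->] /= Hj.
  rewrite nth_cat ltnNge -addnA leq_addr /= addKn.
  rewrite -(IH (fun k => F (lift ord0 k)) i' j Hj) big_mkcond /=.
  congr (nth _ _ (_ + _)); rewrite [RHS]big_mkcond.
  by apply: eq_bigr => k _; rewrite /bump !leq0n !add1n ltnS.
by rewrite big1_eq !add0n nth_cat Hj.
Qed.

Lemma toList_Sbig m (F : 'I_m -> SOb) :
  toList (Sbig F) = flatten [seq toList (F k) | k <- enum 'I_m].
Proof.
apply: toList_eq.
  rewrite size_flatten /shape -map_comp sumnE big_map big_enum /=.
  by apply: eq_bigr => k _; rewrite size_toList.
move=> p; rewrite -[p](@tagnat.sig2K m (fun i => slen (F i))).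
rewrite Sbig_Rank tagnat.RankEsum.
rewrite (eq_bigr (fun k => size (toList (F k)))); last by move=> k _; rewrite size_toList.
by rewrite (@nth_flatten_big _ (fun k => toList (F k))) ?nth_toList ?size_toList.
Qed.


Section Ctx.
Variable L : nat.
Local Notation ctx := (ctx A L).

Definition Dl (D : ctx) (j : nat) : seq ty :=
  if (insub j : option 'I_L) is Some o then toList (D o) else [::].

Lemma DlE (D : ctx) (o : 'I_L) : Dl D o = toList (D o).
Proof. by rewrite /Dl valK. Qed.

Lemma Dl_out (D : ctx) j : (L <= j)%N -> Dl D j = [::].
Proof. by move=> H; rewrite /Dl insubN // -leqNgt. Qed.

Lemma Dl_ext (D D' : ctx) : (forall o : 'I_L, toList (D o) = toList (D' o)) -> forall j, Dl D j = Dl D' j.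
Proof. by move=> H j; rewrite /Dl; case: insub => // o. Qed.

Lemma Dl_Ccat (D G : ctx) j : Dl (Ccat D G) j = Dl D j ++ Dl G j.
Proof. by rewrite /Dl; case: insub => // o; rewrite toList_Scat. Qed.

Lemma Dl_Cbig m (Gs : 'I_m -> ctx) j : Dl (Cbig Gs) j = flatten [seq Dl (Gs i) j | i <- enum 'I_m].
Proof.
rewrite /Dl; case: insub => [o|]; first by rewrite toList_Sbig.
by elim: (enum 'I_m).
Qed.

Lemma Dl_Cunit p a j : Dl (@Cunit A L p a) j = if (j == p) && (j < L)%N then [:: a] else [::].
Proof.
rewrite /Dl; case: insubP => [o Ho Eo|Ho]; last by rewrite (negbTE Ho) andbF.
rewrite Ho andbT /Cunit -Eo; case: (nat_of_ord o == p).
  exact: toList_Ssing.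
exact: toList_Sempty.
Qed.

Definition Cempty : ctx := fun _ => Sempty A.
Lemma Dl_Cempty j : Dl Cempty j = [::].
Proof. by rewrite /Dl; case: insub => // o; exact: toList_Sempty. Qed.

Definition R (D D' : ctx) := forall j, Permutation (Dl D j) (Dl D' j).

Lemma R_eq D D' : (forall j, Dl D j = Dl D' j) -> R D D'.
Proof. by move=> H j; rewrite H. Qed.
Lemma R_refl D : R D D. Proof. by []. Qed.
Lemma R_sym D D' : R D D' -> R D' D. Proof. by move=> H j; apply: Permutation_sym. Qed.
Lemma R_trans D1 D2 D3 : R D1 D2 -> R D2 D3 -> R D1 D3.
Proof. by move=> H1 H2 j; apply: Permutation_trans (H1 j) (H2 j). Qed.

Lemma inh_choice (I : Type) (P : I -> Type) : (forall i, inhabited (P i)) -> inhabited (forall i, P i).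
Proof. by move=> H; constructor => i; exact: (epsilon (H i) (fun _ => True)). Qed.

Lemma R_hom D D' : R D D' -> inhabited (CtxHom cls D D').
Proof.
move=> H; apply: inh_choice => o; apply: perm_shom.
by rewrite -!DlE.
Qed.

End Ctx.

Definition Cext_Dl L (D : ctx A L) s j :
  Dl (Cext D s) j = if (j < L)%N then Dl D j else if j == L then toList s else [::].
Proof.
case: (ltnP j L.+1) => Hj; last first.
  by rewrite Dl_out // !ifF //; apply/negbTE; rewrite -?leqNgt; lia.
rewrite -[j]/(nat_of_ord (Ordinal Hj)) DlE /Cext.
case: unliftP => [o' /(congr1 val) /= Eo|/(congr1 val) /= Eo].
  rewrite /bump leqNgt (ltn_ord o') add0n in Eo.
  by rewrite Eo (ltn_ord o') DlE.
by rewrite Eo ltnn eqxx.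
Qed.

Definition Cins L (p : nat) (D : ctx A L) (s : SOb) : ctx A L.+1 :=
  fun j => match unlift (inord p) j with Some j' => D j' | None => s end.

Lemma Dl_Cins L p (D : ctx A L) s j : (p <= L)%N ->
  Dl (Cins p D s) j = if (j < p)%N then Dl D j else if j == p then toList s else Dl D j.-1.
Proof.
move=> Hp.
case: (ltnP j L.+1) => Hj; last first.
  have h1 : (j < p)%N = false by apply/negbTE; rewrite -leqNgt; lia.
  have h2 : (j == p) = false by apply/negbTE; lia.
  by rewrite h1 h2 !Dl_out //; lia.
rewrite -[j]/(nat_of_ord (Ordinal Hj)) DlE /Cins.
case: unliftP => [o' /(congr1 val) /= Eo|/(congr1 val) /= Eo].
  rewrite /bump inordK ?ltnS // in Eo.
  rewrite Eo; case: (leqP p o') => Hpo /=.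
    have h1 : (o'.+1 < p)%N = false by apply/negbTE; lia.
    have h2 : (o'.+1 == p) = false by apply/negbTE; lia.
    by rewrite add1n h1 h2 /= DlE.
  by rewrite add0n Hpo DlE.
by rewrite Eo inordK ?ltnS // ltnn eqxx.
Qed.

Definition Cdel L (p : nat) (G : ctx A L.+1) : ctx A L :=
  fun j => G (lift (inord p) j).

Lemma Dl_Cdel L p (G : ctx A L.+1) j : (p <= L)%N ->
  Dl (Cdel p G) j = if (j < p)%N then Dl G j else Dl G j.+1.
Proof.
move=> Hp.
case: (ltnP j L) => Hj; last first.
  have h1 : (j < p)%N = false by apply/negbTE; rewrite -leqNgt; lia.
  by rewrite h1 !Dl_out //; lia.
rewrite -[j]/(nat_of_ord (Ordinal Hj)) DlE /Cdel -DlE /= /bump inordK ?ltnS //.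
by case: (leqP p j) => H /=; rewrite ?addn0 ?addn1 //; congr Dl; lia.
Qed.

Definition CbigL L (G : seq (ctx A L * ty)) : ctx A L :=
  Cbig (fun i : 'I_(size G) => (nth (@Cempty L, dty) G i).1).

Lemma Dl_CbigL L (G : seq (ctx A L * ty)) j : Dl (CbigL G) j = flatten [seq Dl g.1 j | g <- G].
Proof.
rewrite /CbigL Dl_Cbig.
rewrite -[in RHS](mkseq_nth (@Cempty L, dty) G) /mkseq -val_enum_ord -!map_comp.
by [].
Qed.

Definition ofList (l : seq ty) : SOb := mkSOb (fun i : 'I_(size l) => nth dty l i).
Lemma toList_ofList l : toList (ofList l) = l.
Proof. by apply: toList_eq. Qed.


Unset Implicit Arguments.
Inductive T : forall L : nat, term -> ctx A L -> ty -> Prop :=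
| TVar L v a : (v < L)%N -> T L (Var v) (@Cunit A L (L - v.+1) a) a
| TLam L P (D : ctx A L) (s : SOb) k (x : 'I_k -> ty) b :
    T L.+1 P (Cext D s) b -> Permutation (toList s) (toList (mkSOb x)) ->
    T L (Lam P) D (tyArr x b)
| TApp L P Q (G0 : ctx A L) k (x : 'I_k -> ty) (G : 'I_k -> ctx A L) a :
    T L P G0 (tyArr x a) -> (forall i, T L Q (G i) (x i)) ->
    T L (App P Q) (Ccat G0 (Cbig G)) a
| TIso L M (D D' : ctx A L) a : T L M D' a -> R D D' -> T L M D a.
Set Implicit Arguments.
Arguments TVar {L v} a _.
Arguments TLam {L P D s k x b} _ _.
Arguments TApp {L P Q G0 k x G a} _ _.
Arguments TIso {L M D D' a} _ _.

Lemma sound L M D a : T L M D a -> inhabited (dob (sem A cls M L) D a).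
Proof.
elim=> {L M D a}.
- move=> L v a Hv /=; rewrite Hv; constructor; exact: Cid.
- move=> L P D s k x b _ [p] Hperm /=.
  have [d] : inhabited (CtxHom cls (Cext D (mkSOb x)) (Cext D s)).
    apply: R_hom => j; rewrite !Cext_Dl; case: ifP => // _; case: ifP => // _.
    exact: Permutation_sym.
  by constructor; exact: (dact d (Did cls b) p).
- move=> L P Q G0 k x G a _ [p] _ Hq /=.
  have [q] := inh_choice Hq.
  constructor; apply: qclass.
  exact: (@mkRep A cls L (sem A cls P L) (sem A cls Q L) _ a k x G0 G p q (Cid cls _)).
- move=> L M D D' a _ [p] HR.
  have [d] := R_hom HR.
  by constructor; exact: (dact d (Did cls a) p).
Qed.


Lemma R_Cext L (D D' : ctx A L) s : R D D' -> R (Cext D s) (Cext D' s).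
Proof. by move=> H j; rewrite !Cext_Dl; case: ifP => // _; case: ifP. Qed.

Lemma inv_var L v D a : T L (Var v) D a -> (v < L)%N /\ R D (@Cunit A L (L - v.+1) a).
Proof.
move=> H; remember (Var v) as M eqn:EM; induction H; try discriminate.
- by case: EM => <-; split => //; exact: R_refl.
- by have [? ?] := IHT EM; split => //; exact: R_trans H0 _.
Qed.

Lemma inv_lam L P D a : T L (Lam P) D a -> exists s k (x : 'I_k -> ty) b,
  a = tyArr x b /\ T L.+1 P (Cext D s) b /\ Permutation (toList s) (toList (mkSOb x)).
Proof.
move=> H; remember (Lam P) as M eqn:EM; induction H; try discriminate.
- by case: EM => <-; exists s, k, x, b.
- have [s [k [x [b [Ea [HT Hp]]]]]] := IHT EM.
  exists s, k, x, b; split => //; split => //.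
  by apply: TIso HT _; apply: R_Cext.
Qed.

Lemma inv_app L P Q D a : T L (App P Q) D a -> exists G0 k (x : 'I_k -> ty) (G : 'I_k -> ctx A L),
  T L P G0 (tyArr x a) /\ (forall i, T L Q (G i) (x i)) /\ R D (Ccat G0 (Cbig G)).
Proof.
move=> H; remember (App P Q) as M eqn:EM; induction H; try discriminate.
- case: EM => <- <-; exists G0, k, x, G; split => //; split => //; exact: R_refl.
- have [G0 [k [x [G [H1 [H2 H3]]]]]] := IHT EM.
  exists G0, k, x, G; split => //; split => //; exact: R_trans H0 H3.
Qed.


Lemma perm_nil (l : seq ty) : Permutation l [::] -> l = [::].
Proof. by move/Permutation_sym/Permutation_nil. Qed.

Lemma flatten_map_nil (I : Type) (f : I -> seq ty) s : (forall i, f i = [::]) -> flatten (map f s) = [::].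
Proof. by move=> H; elim: s => //= x s ->; rewrite H. Qed.

Lemma Perm_cat (a b c d : seq ty) : Permutation a b -> Permutation c d -> Permutation (a ++ c) (b ++ d).
Proof. exact: Permutation_app. Qed.
Lemma Perm_cat_head (a c d : seq ty) : Permutation c d -> Permutation (a ++ c) (a ++ d).
Proof. exact: Permutation_app_head. Qed.

Lemma Perm_flatten_map (I : Type) (f g : I -> seq ty) s :
  (forall i, Permutation (f i) (g i)) -> Permutation (flatten (map f s)) (flatten (map g s)).
Proof. by move=> H; elim: s => //= x s IH; apply: Permutation_app. Qed.

Lemma Perm_flatten_app (I : Type) (f g : I -> seq ty) s :
  Permutation (flatten [seq f i ++ g i | i <- s]) (flatten (map f s) ++ flatten (map g s)).
Proof.
elim: s => //= x s IH.
rewrite -!catA; apply: Permutation_app_head.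
apply: Permutation_trans (Permutation_app_head _ IH) _.
exact: Permutation_app_swap_app.
Qed.

Lemma Perm_swap4 (a b c d : seq ty) : Permutation ((a ++ b) ++ (c ++ d)) ((a ++ c) ++ (b ++ d)).
Proof.
rewrite -!catA; apply: Permutation_app_head.
exact: Permutation_app_swap_app.
Qed.

Ltac Req := match goal with |- @R ?n _ _ => apply: (@R_eq n) end.

Ltac solve_ifs :=
  repeat (case: ifP => ?); try reflexivity;
  try (exfalso; lia);
  try (congr (Dl _ _); lia);
  try (rewrite Dl_out; [done|lia]);
  try (rewrite Dl_out; [|lia]; rewrite Dl_out; [done|lia]).

Lemma strengthen N : forall L c G b, (c <= L)%N -> T L.+1 (Defs.lift 1 c N) G b ->
  Dl G (L - c) = [::] /\ T L N (Cdel (L - c) G) b.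
Proof.
elim: N => [v|P IH|P IHP Q IHQ] L c G b Hc /=.
- case: ifP => Hv H; have [HwL HR] := inv_var H;
  (split; [apply: perm_nil; apply: Permutation_trans (HR _) _; rewrite Dl_Cunit; solve_ifs|]);
  (have HvL : (v < L)%N by lia);
  apply: TIso (TVar b HvL) _ => j;
  rewrite Dl_Cdel ?leq_subr //;
  case: ifP => Hj; (apply: Permutation_trans (HR _) _); rewrite !Dl_Cunit; solve_ifs.
- move=> H; have [s [k [x [b' [-> [HT Hp]]]]]] := inv_lam H.
  have [E HT'] := IH L.+1 c.+1 (Cext G s) b' Hc HT.
  rewrite subSS in E HT'.
  have Hlt : (L - c < L.+1)%N by lia.
  split; first by rewrite Cext_Dl Hlt in E.
  apply: (TLam (s := s)) Hp; apply: TIso HT' _.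
  apply: R_eq => j; rewrite Cext_Dl !Dl_Cdel; try by lia.
  rewrite !Cext_Dl; solve_ifs.
- move=> H; have [G0 [k [x [Gs [HP [HQ HR]]]]]] := inv_app H.
  have [E0 HP'] := IHP L c G0 _ Hc HP.
  have HQ' := fun i => IHQ L c (Gs i) (x i) Hc (HQ i).
  split.
    apply: perm_nil; apply: Permutation_trans (HR _) _.
    rewrite Dl_Ccat Dl_Cbig E0 /= flatten_map_nil //.
    by move=> i; case: (HQ' i).
  apply: TIso (TApp HP' (fun i => proj2 (HQ' i))) _ => j.
  rewrite Dl_Cdel ?leq_subr // Dl_Ccat Dl_Cbig Dl_Cdel ?leq_subr //.
  under eq_map => i do rewrite Dl_Cdel ?leq_subr //.
  by case: ifP => Hj; apply: Permutation_trans (HR _) _; rewrite Dl_Ccat Dl_Cbig.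
Qed.


Fixpoint AllP (X : Type) (P : X -> Prop) (l : seq X) : Prop :=
  if l is x :: l' then P x /\ AllP P l' else True.

Lemma AllP_cat X (P : X -> Prop) l1 l2 : AllP P l1 -> AllP P l2 -> AllP P (l1 ++ l2).
Proof. by elim: l1 => //= x l IH [? ?] ?; split => //; apply: IH. Qed.

Lemma AllP_flatten X (P : X -> Prop) I (f : I -> seq X) s :
  (forall i, AllP P (f i)) -> AllP P (flatten (map f s)).
Proof. by move=> H; elim: s => //= x s IH; apply: AllP_cat. Qed.

Lemma AllP_map X Y (P : Y -> Prop) (f : X -> Y) l : AllP (fun x => P (f x)) l -> AllP P (map f l).
Proof. by elim: l => //= x l IH [? ?]; split => //; apply: IH. Qed.

Lemma AllP_impl X (P Q : X -> Prop) l : (forall x, P x -> Q x) -> AllP P l -> AllP Q l.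
Proof. by move=> H; elim: l => //= x l IH [? ?]; split; [apply: H|apply: IH]. Qed.

Lemma AllP_nth X (P : X -> Prop) l d i : AllP P l -> (i < size l)%N -> P (nth d l i).
Proof. by elim: l i => //= x l IH [|i] [? ?] //= ?; apply: IH. Qed.

Lemma AllP_flatten_nil X (f : X -> seq ty) l : AllP (fun x => f x = [::]) l -> flatten (map f l) = [::].
Proof. by elim: l => //= x l IH [-> ?] /=; apply: IH. Qed.

Lemma flatten_map_flatten X I (f : X -> seq ty) (h : I -> seq X) s :
  flatten [seq f g | g <- flatten [seq h i | i <- s]] = flatten [seq flatten [seq f g | g <- h i] | i <- s].
Proof. by elim: s => //= i s IH; rewrite map_cat flatten_cat IH. Qed.

Lemma choice2 (I X Y : Type) (P : I -> X -> Y -> Prop) :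
  (forall i, exists x y, P i x y) -> exists (f : I -> X) (g : I -> Y), forall i, P i (f i) (g i).
Proof.
move=> H.
pose e i := constructive_indefinite_description _ (H i).
pose e2 i := constructive_indefinite_description _ (proj2_sig (e i)).
by exists (fun i => proj1_sig (e i)), (fun i => proj1_sig (e2 i)) => i; exact: proj2_sig (e2 i).
Qed.

Fixpoint gsubst (N : term) (j : nat) (M : term) : term :=
  match M with
  | Var v => if v == j then N else if (j < v)%N then Var v.-1 else Var v
  | Lam P => Lam (gsubst (Defs.lift 1 0 N) j.+1 P)
  | App P Q => App (gsubst N j P) (gsubst N j Q)
  end.

Lemma lift_lift N c j : Defs.lift 1 c (Defs.lift j c N) = Defs.lift j.+1 c N.
Proof.
elim: N c => [v|P IH|P IHP Q IHQ] c /=; last by rewrite IHP IHQ.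
  case: ifP => H /=; first by rewrite H.
  by rewrite ifF ?addn1 ?addnS //; apply/negbTE; rewrite -leqNgt; move: H => /negbT; rewrite -leqNgt; lia.
by rewrite IH.
Qed.

Lemma lift0 N c : Defs.lift 0 c N = N.
Proof. by elim: N c => [v|P IH|P IHP Q IHQ] c /=; [case: ifP; rewrite ?addn0|rewrite IH|rewrite IHP IHQ]. Qed.

Lemma subst_gsubst N j M : subst N j M = gsubst (Defs.lift j 0 N) j M.
Proof.
elim: M j => [v|P IH|P IHP Q IHQ] j /=; last by rewrite IHP IHQ.
  by [].
by rewrite IH lift_lift.
Qed.

Lemma AS M : forall L j N' (D : ctx A L) a, (j <= L)%N -> T L (gsubst N' j M) D a ->
  exists (D0 : ctx A L) (G : seq (ctx A L * ty)),
    T L.+1 M (Cins (L - j) D0 (ofList (map snd G))) a /\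
    AllP (fun g => T L N' g.1 g.2) G /\
    R D (Ccat D0 (CbigL G)).
Proof.
elim: M => [v|P IH|P IHP Q IHQ] L j N' D a Hj /=.
- case: eqP => [->|Hne] H.
    exists (@Cempty L), [:: (D, a)]; split; last split; [|by split|].
      have Hj' : (j < L.+1)%N by [].
      apply: (TIso (TVar a Hj')); Req; move=> i.
      rewrite Dl_Cins ?leq_subr // Dl_Cunit !Dl_Cempty toList_ofList /=; solve_ifs.
    by Req; move=> i; rewrite Dl_Ccat Dl_CbigL Dl_Cempty /= cats0.
  move: H; case: ifP => Hjv H; have [HvL HR] := inv_var H;
  exists (@Cunit A L (L - (if (j < v)%N then v.-1 else v).+1) a), [::]; rewrite Hjv;
  (split; last split => //; last by apply: R_trans HR _; Req; move=> i; rewrite Dl_Ccat Dl_CbigL /= cats0);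
  (have Hv : (v < L.+1)%N by move/eqP: Hne; lia);
  apply: TIso (TVar a Hv) _; Req; move=> i;
  rewrite Dl_Cins ?leq_subr // !Dl_Cunit toList_ofList /=; solve_ifs.
- move=> H; have [s [k [x [b [-> [HT Hp]]]]]] := inv_lam H.
  have [D0 [G [HM [HF HR]]]] := IH L.+1 j.+1 _ _ _ Hj HT.
  rewrite subSS in HM.
  have HF' : AllP (fun g => Dl g.1 L = [::] /\ T L N' (Cdel L g.1) g.2) G.
    apply: AllP_impl HF => g Hg.
    have := strengthen (leq0n L) Hg; by rewrite subn0.
  exists (Cdel L D0), [seq (Cdel L g.1, g.2) | g <- G].
  have Esnd : [seq i.2 | i <- [seq (Cdel L g.1, g.2) | g <- G]] = [seq i.2 | i <- G] by rewrite -map_comp.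
  rewrite Esnd; split; last split.
  + apply: (TLam (s := D0 ord_max)).
      apply: (TIso HM); Req; move=> i.
      rewrite Cext_Dl !Dl_Cins; try by lia.
      rewrite !Dl_Cdel; try by lia.
      rewrite -(DlE D0 ord_max) /=; solve_ifs.
    apply: Permutation_trans Hp; apply: Permutation_sym.
    have := HR L; rewrite Cext_Dl ltnn eqxx Dl_Ccat Dl_CbigL.
    rewrite (AllP_flatten_nil (f := fun g => Dl g.1 L)) ?cats0 -?DlE //.
    by apply: AllP_impl HF' => g [].
  + by apply: AllP_map; apply: AllP_impl HF' => g [].
  + move=> i; case: (ltnP i L) => Hi; last by rewrite !Dl_out.
    have := HR i; rewrite Cext_Dl Hi !Dl_Ccat !Dl_CbigL Dl_Cdel // Hi -map_comp.
    have E : (fun g : ctx A L * ty => Dl g.1 i) \o (fun g : ctx A L.+1 * ty => (Cdel L g.1, g.2)) =1 (fun g => Dl g.1 i).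
      by move=> g /=; rewrite Dl_Cdel // Hi.
    by rewrite (eq_map E).
- move=> H; have [G0 [k [x [G [HP [HQ HR]]]]]] := inv_app H.
  have [D0P [GP [HMP [HFP HRP]]]] := IHP L j N' G0 _ Hj HP.
  have [D0Q [GQ HQs]] := choice2 (fun i => IHQ L j N' (G i) (x i) Hj (HQ i)).
  exists (Ccat D0P (Cbig D0Q)), (GP ++ flatten [seq GQ i | i <- enum 'I_k]).
  split; last split.
  + apply: (TIso (TApp HMP (fun i => proj1 (HQs i)))); Req; move=> m.
    rewrite !Dl_Ccat !Dl_Cbig !Dl_Cins ?leq_subr //.
    case: ifP => H1.
      rewrite Dl_Ccat Dl_Cbig; congr (_ ++ flatten _); apply: eq_map => i.
      by rewrite Dl_Cins ?leq_subr // H1.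
    case: ifP => H2.
      rewrite !toList_ofList map_cat map_flatten -map_comp; congr (_ ++ flatten _); apply: eq_map => i.
      by rewrite /= Dl_Cins ?leq_subr // H1 H2 toList_ofList.
    rewrite Dl_Ccat Dl_Cbig; congr (_ ++ flatten _); apply: eq_map => i.
    by rewrite Dl_Cins ?leq_subr // H1 H2.
  + apply: AllP_cat => //; by apply: AllP_flatten => i; case: (HQs i) => _ [].
  + move=> m; apply: Permutation_trans (HR m) _.
    rewrite !Dl_Ccat Dl_CbigL !Dl_Cbig map_cat flatten_cat flatten_map_flatten.
    apply: Permutation_trans (Perm_cat (HRP m) (Perm_flatten_map (enum 'I_k) (fun i => proj2 (proj2 (HQs i)) m))) _.
    have E : (fun i => Dl (Ccat (D0Q i) (CbigL (GQ i))) m) =1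
             (fun i => Dl (D0Q i) m ++ flatten [seq Dl g.1 m | g <- GQ i]).
      by move=> i; rewrite Dl_Ccat Dl_CbigL.
    rewrite (eq_map E).
    eapply Permutation_trans; [apply: Perm_cat_head; exact: Perm_flatten_app|].
    rewrite Dl_Ccat Dl_CbigL; exact: Perm_swap4.
Qed.


Lemma toList_nth (X : Type) (G : seq X) d (f : X -> ty) :
  toList (mkSOb (fun i : 'I_(size G) => f (nth d G i))) = map f G.
Proof. by rewrite /toList /= -[in RHS](mkseq_nth d G) /mkseq -val_enum_ord -!map_comp. Qed.

Lemma redex L M N (D : ctx A L) a : T L (subst N 0 M) D a -> T L (App (Lam M) N) D a.
Proof.
rewrite subst_gsubst lift0 => H.
have [D0 [G [HM [HF HR]]]] := AS (leq0n L) H.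
rewrite subn0 in HM.
apply: (TIso _ HR).
apply: (@TApp L (Lam M) N D0 (size G) (fun i => (nth (@Cempty L, dty) G i).2)
          (fun i => (nth (@Cempty L, dty) G i).1) a).
- apply: (TLam (s := ofList (map snd G))).
    apply: (TIso HM); Req; move=> i; rewrite Cext_Dl Dl_Cins //; solve_ifs.
  by rewrite toList_ofList toList_nth.
- by move=> i; apply: (AllP_nth _ HF); rewrite ltn_ord.
Qed.

Lemma expand M N : beta M N -> forall L (D : ctx A L) a, T L N D a -> T L M D a.
Proof.
elim=> {M N}.
- by move=> M N L D a; apply: redex.
- move=> M M' N _ IH L D a /inv_app [G0 [k [x [G [HP [HQ HR]]]]]].
  by apply: (TIso _ HR); apply: TApp (IH _ _ _ HP) HQ.
- move=> M N N' _ IH L D a /inv_app [G0 [k [x [G [HP [HQ HR]]]]]].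
  by apply: (TIso _ HR); apply: TApp HP (fun i => IH _ _ _ (HQ i)).
- move=> M M' _ IH L D a /inv_lam [s [k [x [b [-> [HT Hp]]]]]].
  exact: TLam (IH _ _ _ HT) Hp.
Qed.

Lemma expand_star M N : beta_star M N -> forall L (D : ctx A L) a, T L N D a -> T L M D a.
Proof.
elim=> {M N}.
- move=> M N H L D a; exact: expand.
- by [].
- move=> M N P _ IH1 _ IH2 L D a H; exact: IH1 (IH2 _ _ _ H).
Qed.

Lemma scoped_lift N : forall n c, scoped n N -> scoped n.+1 (Defs.lift 1 c N).
Proof.
elim: N => [v|P IH|P IHP Q IHQ] n c /=.
- by move=> Hv; case: ifP => _ /=; lia.
- exact: IH.
- by move=> /andP [H1 H2]; rewrite IHP ?IHQ.
Qed.

Lemma scoped_gsubst M : forall n j N', (j <= n)%N -> scoped n.+1 M -> scoped n N' -> scoped n (gsubst N' j M).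
Proof.
elim: M => [v|P IH|P IHP Q IHQ] n j N' Hj /=.
- move=> Hv HN; case: eqP => // Hne; case: ifP => /= H; move/eqP: Hne; lia.
- move=> HP HN; apply: IH => //; exact: scoped_lift.
- by move=> /andP [H1 H2] HN; rewrite IHP ?IHQ.
Qed.

Lemma scoped_beta M N : beta M N -> forall n, scoped n M -> scoped n N.
Proof.
elim=> {M N} /=.
- move=> M N n /andP [H1 H2]; rewrite subst_gsubst lift0; exact: scoped_gsubst.
- by move=> M M' N _ IH n /andP [H1 H2]; rewrite IH.
- by move=> M N N' _ IH n /andP [H1 H2]; rewrite H1 IH.
- by move=> M M' _ IH n; apply: IH.
Qed.

Lemma scoped_star M N : beta_star M N -> forall n, scoped n M -> scoped n N.
Proof.
elim=> {M N}.
- by move=> M N H n; apply: scoped_beta.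
- by [].
- move=> M N P _ IH1 _ IH2 n H; exact: IH2 (IH1 _ H).
Qed.

Lemma hva_typ H : head_var_app H -> forall L, scoped L H -> forall a, exists D : ctx A L, T L H D a.
Proof.
elim=> {H} [v|M N _ IH] L /=.
- by move=> Hv a; exists (@Cunit A L (L - v.+1) a); exact: TVar.
- move=> /andP [H1 _] a.
  have [D HD] := IH L H1 (tyArr (fun i : 'I_0 => False_rect ty (ord0_absurd i)) a).
  exists (Ccat D (Cbig (fun i : 'I_0 => False_rect (ctx A L) (ord0_absurd i)))).
  by apply: TApp HD _ => i; case: (ord0_absurd i).
Qed.

Lemma hnf_typ H : hnf H -> forall L, scoped L H -> exists (D : ctx A L) a, T L H D a.
Proof.
elim=> {H} [M HM|M _ IH] L /=.
- move=> Hs; have [D HD] := hva_typ HM Hs (tyA o0); by exists D, (tyA o0).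
- move=> Hs; have [D [a HT]] := IH _ Hs.
  exists (Cdel L D), (tyArr (@sel A (D ord_max)) a).
  apply: (TLam (s := D ord_max)); last exact: Permutation_refl.
  apply: (TIso HT); Req; move=> i; rewrite Cext_Dl Dl_Cdel // -(DlE D ord_max) /=; solve_ifs.
Qed.

End Work.

Theorem corollary1 (A : Cat) (cls : Cls) (HA : inhabited (Ob A))
  (n : nat) (M : term) :
  scoped n M -> head_normalizable M ->
  exists (D : ctx A n) (a : ty A), inhabited (dob (sem A cls M n) D a).
Proof.
move=> Hs [N [Hst Hh]]; case: HA => o.
have HsN := scoped_star Hst Hs.
have [D [a HT]] := hnf_typ o Hh HsN.
exists D, a; exact: (sound cls o (expand_star o Hst HT)).
Qed.
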